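(* Let $k\geq 3$ and let $G$ be a diregular $(2,k,+3)$-digraph. Let $u,v$ be distinct vertices with exactly one common out-neighbour $u_2$, and write $N^+(u)=\{u_1,u_2\}$, $N^+(v)=\{v_1,u_2\}$. Then $v_1\in N^{k-1}(u_1)\cup O(u)$ and $u_1\in N^{k-1}(v_1)\cup O(v)$.
   Context: A digraph is $k$-geodetic if for every ordered pair of vertices $x,y$ there is at most one directed path from $x$ to $y$ of length at most $k$ (the trivial path counts). A diregular $(2,k,+3)$-digraph is a $k$-geodetic digraph of order $1+2+\dots+2^k+3$ in which every vertex has in- and out-degree $2$. $N^+(x)$ is the set of out-neighbours of $x$; $N^l(x)$ is the set of end-vertices of directed paths of length $l$ starting at $x$. $d(x,y)$ is the directed distance; $O(x)=\{y: d(x,y)\geq k+1\}$ is the outlier set of $x$. *)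

(* Defs.v *)
From mathcomp Require Import all_boot.
Set Implicit Arguments. Unset Strict Implicit. Unset Printing Implicit Defensive.

(* A digraph is a finite vertex type V with an arc relation e : rel V.
   A walk from x is a sequence p of vertices with x :: p an e-path;
   its length is size p and it ends at last x p. *)

Definition dwalk (V : finType) (e : rel V) (x y : V) (p : seq V) : bool :=
  path e x p && (last x p == y).

Definition outN (V : finType) (e : rel V) (x : V) : {set V} := [set y | e x y].
Definition inN (V : finType) (e : rel V) (x : V) : {set V} := [set y | e y x].

Definition k_geodetic (V : finType) (e : rel V) (k : nat) : Prop :=
  forall (x y : V) (p q : seq V),
    dwalk e x y p -> size p <= k -> dwalk e x y q -> size q <= k -> p = q.

Definition diregular_2k3 (V : finType) (e : rel V) (k : nat) : Prop :=
  [/\ k_geodetic e k,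
      #|V| = (\sum_(i < k.+1) 2 ^ i) + 3 &
      forall x : V, #|outN e x| = 2 /\ #|inN e x| = 2].

Definition Nl (V : finType) (e : rel V) (l : nat) (x y : V) : Prop :=
  exists p : seq V, dwalk e x y p /\ size p = l.

(* y \in O(x): d(x,y) >= k+1, i.e. no walk of length <= k from x to y
   (including the case d(x,y) = infinity) *)
Definition outlier (V : finType) (e : rel V) (k : nat) (x y : V) : Prop :=
  forall l, l <= k -> ~ Nl e l x y.

(* Main.v *)
Require Import Defs.
From mathcomp Require Import all_boot.
From mathcomp Require Import zify.
Set Implicit Arguments. Unset Strict Implicit. Unset Printing Implicit Defensive.

Lemma dwalk_cons (V : finType) (e : rel V) x y z p :
  dwalk e x y (z :: p) = e x z && dwalk e z y p.
Proof. by rewrite /dwalk /= andbA. Qed.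

Lemma dwalk_nil (V : finType) (e : rel V) x y : dwalk e x y [::] = (x == y).
Proof. by rewrite /dwalk. Qed.

Lemma dwalk_cat (V : finType) (e : rel V) x y z p q :
  dwalk e x y p -> dwalk e y z q -> dwalk e x z (p ++ q).
Proof.
by rewrite /dwalk cat_path last_cat => /andP[-> /eqP ->] /andP[-> ->].
Qed.

Lemma dwalk1 (V : finType) (e : rel V) x y : e x y -> dwalk e x y [:: y].
Proof. by rewrite /dwalk /= => ->; rewrite eqxx. Qed.

Lemma geo_size (V : finType) (e : rel V) k x y p q :
  k_geodetic e k -> dwalk e x y p -> dwalk e x y q -> size p <= k -> size q <= k ->
  size p = size q.
Proof. by move=> G hp hq sp sq; rewrite (G _ _ _ _ hp sp hq sq). Qed.

Lemma outN2 (V : finType) (e : rel V) x a b z :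
  outN e x = [set a; b] -> e x z -> z = a \/ z = b.
Proof. by move=> H exz; apply/set2P; rewrite -H inE. Qed.

Fixpoint S (V : finType) (e : rel V) (m : nat) (x : V) : {set V} :=
  if m is m'.+1 then \bigcup_(y in outN e x) S e m' y else [set x].

Lemma S_Nl (V : finType) (e : rel V) m x y : y \in S e m x <-> Nl e m x y.
Proof.
elim: m x => [|m IH] x /=.
  rewrite in_set1; split.
    by move/eqP=> ->; exists [::]; rewrite dwalk_nil.
  by case=> [[|z p]] [] //; rewrite dwalk_nil eq_sym.
split.
  case/bigcupP=> z; rewrite inE => exz /IH [p [hp sp]].
  by exists (z :: p); rewrite dwalk_cons exz hp /= sp.
case=> [[|z p]] [] //= hp [sp].
move: hp; rewrite dwalk_cons => /andP[exz hp].
apply/bigcupP; exists z; first by rewrite inE.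
by apply/IH; exists p.
Qed.

Lemma S_card (V : finType) (e : rel V) k m x :
  k_geodetic e k -> (forall x, #|outN e x| = 2) -> m <= k -> #|S e m x| = 2 ^ m.
Proof.
move=> G deg; elim: m x => [|m IH] x hm /=; first by rewrite cards1.
have /cards2P [a [b [ab Hx]]] : #|outN e x| == 2 by rewrite deg.
have -> : \bigcup_(y in outN e x) S e m y = S e m a :|: S e m b.
  apply/setP => w; rewrite in_setU; apply/bigcupP/orP.
    by case=> z; rewrite Hx => /set2P [] -> ->; [left|right].
  by case=> H; [exists a | exists b] => //; rewrite Hx !inE eqxx ?orbT.
have I0 : S e m a :&: S e m b = set0.
  apply/setP => w; rewrite in_setI in_set0; apply/negP => /andP[/S_Nl [p [hp sp]] /S_Nl [q [hq sq]]].
  have ea : e x a by have := set21 a b; rewrite -Hx inE.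
  have eb : e x b by have := set22 a b; rewrite -Hx inE.
  have h1 : dwalk e x w (a :: p) by rewrite dwalk_cons ea.
  have h2 : dwalk e x w (b :: q) by rewrite dwalk_cons eb.
  have := G _ _ _ _ h1 _ h2; rewrite /= sp sq => /(_ hm hm) [] Eab _.
  by move: ab; rewrite Eab eqxx.
rewrite cardsU I0 cards0 !IH ?(ltnW hm) // expnS; lia.
Qed.


Lemma U_card (V : finType) (e : rel V) k n x :
  k_geodetic e k -> (forall x, #|outN e x| = 2) -> n <= k ->
  #|\bigcup_(i < n) S e i.+1 x| = \sum_(i < n) 2 ^ i.+1.
Proof.
move=> G deg; elim: n => [|n IH] hn; first by rewrite !big_ord0 cards0.
rewrite !big_ord_recr.
have I0 : (\bigcup_(i < n) S e i.+1 x) :&: S e n.+1 x = set0.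
  apply/setP => w; rewrite in_setI in_set0; apply/negP => /andP[/bigcupP [i _ /S_Nl [p [hp sp]]] /S_Nl [q [hq sq]]].
  have hi : i.+1 <= k by have := ltn_ord i; lia.
  have := geo_size G hp hq; rewrite sp sq => /(_ hi hn).
  have := ltn_ord i; move=> ? ?; lia.
rewrite cardsU I0 cards0 IH ?(ltnW hn) // (S_card _ G deg hn). by rewrite subn0.
Qed.

Lemma count_contra (V : finType) (e : rel V) k u v (W : {set V}) :
  diregular_2k3 e k -> 4 <= #|W| ->
  v \notin \bigcup_(i < k) S e i.+1 u -> v \notin W ->
  W :&: (\bigcup_(i < k) S e i.+1 u) = set0 -> False.
Proof.
case=> G hV deg hW hvU hvW I0.
have deg' : forall x, #|outN e x| = 2 by move=> x; case: (deg x).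
set U := \bigcup_(i < k) S e i.+1 u in hvU hvW I0.
have cU : #|U| = \sum_(i < k) 2 ^ i.+1 by rewrite /U (U_card _ G deg').
have cvU : #|v |: U| = (\sum_(i < k) 2 ^ i.+1).+1 by rewrite cardsU1 hvU cU.
have I1 : (v |: U) :&: W = set0.
  apply/setP => w; rewrite in_setI in_setU1 in_set0.
  case: eqP => [-> /=|_ /=]; first by apply/negbTE.
  by apply/negP => /andP[a b]; have := in_set0 w; rewrite -I0 in_setI a b.
have := max_card (mem ((v |: U) :|: W)).
rewrite cardsU I1 cards0 cvU hV big_ord_recl /= expn0.
have -> : \sum_(i < k) 2 ^ (bump 0 i) = \sum_(i < k) 2 ^ i.+1 by [].
lia.
Qed.


Lemma half (V : finType) (e : rel V) (k : nat) (u v u1 u2 v1 : V) :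
  3 <= k ->
  diregular_2k3 e k ->
  u != v ->
  outN e u = [set u1; u2] ->
  outN e v = [set v1; u2] ->
  outN e u :&: outN e v = [set u2] ->
  Nl e k.-1 u1 v1 \/ outlier e k u v1.
Proof.
move=> hk D uv Hu Hv Huv.
have D' := D; case: D => G hV deg.
have deg' : forall x, #|outN e x| = 2 by move=> x; case: (deg x).
have eu1 : e u u1 by have := set21 u1 u2; rewrite -Hu inE.
have eu2 : e u u2 by have := set22 u1 u2; rewrite -Hu inE.
have ev1 : e v v1 by have := set21 v1 u2; rewrite -Hv inE.
have ev2 : e v u2 by have := set22 v1 u2; rewrite -Hv inE.
have u12 : u1 != u2 by move: (deg' u); rewrite Hu cards2; case: (u1 != u2).
have v12 : v1 != u2 by move: (deg' v); rewrite Hv cards2; case: (v1 != u2).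
have uv1 : u1 != v1.
  apply/eqP => E.
  have : u1 \in outN e u :&: outN e v by rewrite in_setI !inE eu1 E ev1.
  by rewrite Huv in_set1 => /eqP E2; rewrite E2 eqxx in u12.
case: (boolP [exists i : 'I_k.+1, v1 \in S e i u]) =>
   [/existsP [i /S_Nl [p [hp sp]]] | hno]; last first.
  right => l hl /S_Nl hS; move/negP: hno; apply; apply/existsP.
  by exists (Ordinal (hl : l < k.+1)).
have ik : i <= k by rewrite -ltnS.
case: p hp sp => [|z p'] hp sp.
  move: hp; rewrite dwalk_nil => /eqP E; subst v1.
  have h1 : dwalk e v u2 [:: u; u2] by rewrite dwalk_cons ev1 dwalk1.
  have := geo_size G h1 (dwalk1 ev2); rewrite /=; clear -hk; lia.
move: hp; rewrite dwalk_cons => /andP [euz hp'].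
case: (outN2 Hu euz) => Ez; subst z; last first.
  have h1 : dwalk e v v1 (u2 :: p') by rewrite dwalk_cons ev2.
  have s1 : size (u2 :: p') <= k by rewrite sp.
  have s2 : size [:: v1] <= k by rewrite /=; clear -hk; lia.
  have [E _] := G _ _ _ _ h1 s1 (dwalk1 ev1) s2.
  by rewrite E eqxx in v12.
move: sp => /= sp.
case: (eqVneq (size p') k.-1) => [E | ne]; first by left; exists p'.
set j := size p' in sp ne.
have j1 : 1 <= j.
  case: p' hp' @j {sp ne} => [|? ?] //; rewrite dwalk_nil => /eqP E.
  by rewrite E eqxx in uv1.
have jk : j.+2 <= k by clear -ne ik sp; lia.
exfalso.
apply: (count_contra (u := u) (v := v) (W := S e (k - j) v1) D').
- rewrite (S_card _ G deg') ?leq_subr //.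
  have -> : k - j = (k - j - 2).+2 by clear -jk; lia.
  rewrite !expnS; have := expn_gt0 2 (k - j - 2); clear; lia.
- apply/bigcupP => [[i' _ /S_Nl [q [hq sq]]]].
  have i'k : i' < k := ltn_ord i'.
  case: q hq sq => [|z q'] // hq [sq].
  move: hq; rewrite dwalk_cons => /andP [euz' hq'].
  case: (outN2 Hu euz') => Ez; subst z.
    case: (ltnP i'.+1 k) => hi'.
      have h1 : dwalk e u u2 (u1 :: q' ++ [:: u2]) by rewrite dwalk_cons eu1 (dwalk_cat hq' (dwalk1 ev2)).
      have s1 : size (u1 :: q' ++ [:: u2]) <= k by rewrite /= size_cat sq addn1.
      have s2 : size [:: u2] <= k by rewrite /=; clear -hk; lia.
      have := geo_size G h1 (dwalk1 eu2) s1 s2.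
      by rewrite /= size_cat sq addn1.
    have h1 : dwalk e u1 v1 (q' ++ [:: v1]) by rewrite (dwalk_cat hq' (dwalk1 ev1)).
    have s1 : size (q' ++ [:: v1]) <= k by rewrite size_cat sq addn1.
    have s2 : size p' <= k by rewrite -/j; clear -jk; lia.
    have := geo_size G h1 hp' s1 s2.
    rewrite size_cat sq addn1 -/j; clear -hi' i'k jk; lia.
  have h1 : dwalk e u2 u2 (q' ++ [:: u2]) by rewrite (dwalk_cat hq' (dwalk1 ev2)).
  have h0 : dwalk e u2 u2 [::] by rewrite dwalk_nil.
  have s1 : size (q' ++ [:: u2]) <= k by rewrite size_cat sq addn1.
  have := geo_size G h1 h0 s1 isT.
  by rewrite size_cat sq addn1.
- apply/negP => /S_Nl [r [hr sr]].
  have h1 : dwalk e v v (v1 :: r) by rewrite dwalk_cons ev1.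
  have h0 : dwalk e v v [::] by rewrite dwalk_nil.
  have s1 : size (v1 :: r) <= k by rewrite /= sr; clear -j1 jk; lia.
  by have := geo_size G h1 h0 s1 isT; rewrite /= sr.
- apply/setP => w; rewrite in_setI in_set0; apply/negP =>
    /andP [/S_Nl [r [hr sr]] /bigcupP [i' _ /S_Nl [q [hq sq]]]].
  have i'k : i' < k := ltn_ord i'.
  case: q hq sq => [|z q'] // hq [sq].
  move: hq; rewrite dwalk_cons => /andP [euz' hq'].
  case: (outN2 Hu euz') => Ez; subst z.
    have h1 : dwalk e u1 w (p' ++ r) by apply: dwalk_cat hp' hr.
    have s1 : size (p' ++ r) <= k by rewrite size_cat sr -/j; clear -jk; lia.
    have s2 : size q' <= k by rewrite sq ltnW.
    have := geo_size G h1 hq' s1 s2.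
    rewrite size_cat sr sq -/j; clear -jk i'k; lia.
  have h1 : dwalk e v w (u2 :: q') by rewrite dwalk_cons ev2.
  have h2 : dwalk e v w (v1 :: r) by rewrite dwalk_cons ev1.
  have s1 : size (u2 :: q') <= k by rewrite /= sq.
  have s2 : size (v1 :: r) <= k by rewrite /= sr; clear -j1 jk; lia.
  have [E _] := G _ _ _ _ h1 s1 h2 s2.
  by rewrite E eqxx in v12.
Qed.

Theorem corollary2 (V : finType) (e : rel V) (k : nat) (u v u1 u2 v1 : V) :
  3 <= k ->
  diregular_2k3 e k ->
  u != v ->
  outN e u = [set u1; u2] ->
  outN e v = [set v1; u2] ->
  outN e u :&: outN e v = [set u2] ->
  (Nl e k.-1 u1 v1 \/ outlier e k u v1) /\
  (Nl e k.-1 v1 u1 \/ outlier e k v u1).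
Proof.
move=> hk D uv Hu Hv Huv; split; first exact: (half hk D uv Hu Hv Huv).
apply: (half hk D _ Hv Hu); first by rewrite eq_sym.
by rewrite setIC.
Qed.
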